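(* Let $n\ge1$ and let $\mathcal{ORCT}_n$ be the semigroup of all full contractions of $[n]=\{1,\dots,n\}$ that are either order-preserving or order-reversing. Let $\textnormal{E}(\mathcal{ORCT}_n)=\{\alpha\in\mathcal{ORCT}_n:\alpha^2=\alpha\}$ be its set of idempotents. Then $|\textnormal{E}(\mathcal{ORCT}_n)|=\frac{n(n+1)}{2}$.
   Context: $\mathcal{T}_n$ is the semigroup (under composition) of all maps $[n]\to[n]$. A map $\alpha\in\mathcal{T}_n$ is a contraction if $|x\alpha-y\alpha|\le |x-y|$ for all $x,y\in[n]$; it is order-preserving if $x\le y$ implies $x\alpha\le y\alpha$, and order-reversing if $x\le y$ implies $x\alpha\ge y\alpha$. $\mathcal{ORCT}_n$ is the set of contractions that are order-preserving or order-reversing. *)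

(* Defs.v *)
From mathcomp Require Import all_boot all_order all_algebra.
Set Implicit Arguments. Unset Strict Implicit. Unset Printing Implicit Defensive.

(* [n] = {1,...,n} is modelled by 'I_n = {0,...,n-1} (order/distances preserved).
   T_n = {ffun 'I_n -> 'I_n}. *)

Definition dist (x y : nat) : nat := (x - y) + (y - x).

Definition is_contraction n (a : {ffun 'I_n -> 'I_n}) : bool :=
  [forall x : 'I_n, forall y : 'I_n, dist (a x) (a y) <= dist x y].

Definition is_order_preserving n (a : {ffun 'I_n -> 'I_n}) : bool :=
  [forall x : 'I_n, forall y : 'I_n, (x <= y)%N ==> (a x <= a y)%N].

Definition is_order_reversing n (a : {ffun 'I_n -> 'I_n}) : bool :=
  [forall x : 'I_n, forall y : 'I_n, (x <= y)%N ==> (a y <= a x)%N].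

Definition ORCT n : {set {ffun 'I_n -> 'I_n}} :=
  [set a | is_contraction a && (is_order_preserving a || is_order_reversing a)].

(* composition in T_n: x (a b) = (x a) b  *)
Definition tcomp n (a b : {ffun 'I_n -> 'I_n}) : {ffun 'I_n -> 'I_n} :=
  [ffun x => b (a x)].

Definition E_ORCT n : {set {ffun 'I_n -> 'I_n}} :=
  [set a in ORCT n | tcomp a a == a].

(* Main.v *)
Require Import Defs.
From mathcomp Require Import all_boot all_order all_algebra.
From mathcomp Require Import zify.
Set Implicit Arguments. Unset Strict Implicit. Unset Printing Implicit Defensive.

Definition clamp m (i j : 'I_m.+1) : {ffun 'I_m.+1 -> 'I_m.+1} :=
  [ffun x : 'I_m.+1 => if (x < i)%N then i else if (j < x)%N then j else x].

Lemma clampE m (i j x : 'I_m.+1) : (i <= j)%N ->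
  (clamp i j x : nat) = maxn i (minn x j).
Proof.
move=> hij; rewrite ffunE; case: ifP => h1; first lia.
case: ifP => h2; lia.
Qed.

Lemma clamp_in m (i j : 'I_m.+1) : (i <= j)%N -> clamp i j \in E_ORCT m.+1.
Proof.
move=> hij; rewrite !inE; apply/andP; split; [apply/andP; split|].
- apply/forallP => x; apply/forallP => y; rewrite /dist !clampE //; lia.
- apply/orP; left; apply/forallP => x; apply/forallP => y; apply/implyP => hxy.
  rewrite !clampE //; lia.
- apply/eqP/ffunP => x; apply/val_inj; rewrite /tcomp ffunE /= !clampE //; lia.
Qed.

Lemma ivt (f : nat -> nat) (x : nat) k :
  (forall l, l < k -> f l.+1 <= (f l).+1)%N ->
  (f 0 <= x <= f k)%N -> exists z, (z <= k)%N /\ f z = x.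
Proof.
elim: k => [|k IH] Hs Hx.
  by exists 0; split => //; apply/eqP; rewrite eqn_leq.
case: (leqP x (f k)) => h.
  have [z [hz e]] := IH (fun l hl => Hs l (ltnW hl)) ltac:(lia).
  by exists z; split => //; lia.
have := Hs k (ltnSn k); exists k.+1; split => //; lia.
Qed.

Lemma char m (a : {ffun 'I_m.+1 -> 'I_m.+1}) : a \in E_ORCT m.+1 ->
  exists i j : 'I_m.+1, (i <= j)%N /\ a = clamp i j.
Proof.
rewrite !inE => /andP[/andP[Hc Hor] /eqP Hid].
have Hid' : forall x, a (a x) = a x.
  by move=> x; have := congr1 (fun f : {ffun _ -> _} => f x) Hid; rewrite /tcomp ffunE.
have Hc' : forall x y : 'I_m.+1, (dist (a x) (a y) <= dist x y)%N.
  by move=> x y; move/forallP: Hc => /(_ x) /forallP /(_ y).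
case/orP: Hor => Ho.
- have Ho' : forall x y : 'I_m.+1, (x <= y)%N -> (a x <= a y)%N.
    by move=> x y; move/forallP: Ho => /(_ x) /forallP /(_ y) /implyP.
  set i := a ord0; set j := a ord_max.
  have hij : (i <= j)%N by apply: Ho'; rewrite /=; lia.
  have mid : forall x : 'I_m.+1, (i <= x <= j)%N -> a x = x.
    move=> x hx.
    have Hs : forall l, (l < m)%N -> (a (inord l.+1) <= (a (inord l)).+1)%N.
      move=> l hl; have := Hc' (inord l) (inord l.+1).
      rewrite /dist !inordK; lia.
    have Hm : (inord m : 'I_m.+1) = ord_max by apply/val_inj; rewrite /= inordK.
    have H0 : (inord 0 : 'I_m.+1) = ord0 by apply/val_inj; rewrite /= inordK.
    have Hx : (a (inord 0) <= x <= a (inord m))%N by rewrite Hm H0.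
    have [z [hz e]] := @ivt (fun k => a (inord k)) x m Hs Hx.
    have ex : a (inord z) = x by apply/val_inj.
    by rewrite -ex Hid'.
  exists i, j; split => //; apply/ffunP => x; apply/val_inj; rewrite /= clampE //.
  have h0 : (i <= a x)%N by apply: Ho'.
  have h1 : (a x <= j)%N by apply: Ho'; rewrite /=; have := ltn_ord x; lia.
  case: (ltnP x i) => hxi.
    have hi : a i = i by apply: mid; lia.
    have := Ho' x i (ltnW hxi); rewrite hi; lia.
  case: (ltnP j x) => hjx.
    have hj : a j = j by apply: mid; lia.
    have := Ho' j x (ltnW hjx); rewrite hj; lia.
  rewrite mid; lia.
- have Ho' : forall x y : 'I_m.+1, (x <= y)%N -> (a y <= a x)%N.
    by move=> x y; move/forallP: Ho => /(_ x) /forallP /(_ y) /implyP.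
  set i := a ord0; set j := a ord_max.
  have hji : (j <= i)%N by apply: Ho'; rewrite /=; lia.
  have := Ho' _ _ hji; rewrite Hid' /j Hid' -/i -/j => hij.
  exists i, i; split => //; apply/ffunP => x; apply/val_inj; rewrite /= clampE //.
  have h0 : (a x <= i)%N by apply: Ho'.
  have h1 : (j <= a x)%N by apply: Ho'; rewrite /=; have := ltn_ord x; lia.
  lia.
Qed.

Lemma inner n (i : 'I_n) : \sum_(j < n | (i <= j)%N) 1 = n - i.
Proof.
rewrite -(big_mkord (fun j => (i <= j)%N) (fun _ => 1)).
rewrite (@big_cat_nat _ _ _ i) /=; last exact: ltnW; last by [].
rewrite big_nat_cond big1 ?add0n; last by move=> j /andP[/andP[_ h] h']; lia.
rewrite big_nat_cond (eq_bigl (fun j => (i <= j < n)%N && true)); last by move=> j; rewrite andbT; case: (leqP i j); rewrite ?andbT ?andbF.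
rewrite -big_nat_cond sum_nat_const_nat; lia.
Qed.
Lemma card_tri n : #|[set p : 'I_n * 'I_n | (p.1 <= p.2)%N]| = \sum_(j < n) j.+1.
Proof.
rewrite -sum1_card.
rewrite (eq_bigl (fun p : 'I_n * 'I_n => (p.1 <= p.2)%N)); last by move=> p; rewrite inE.
rewrite -(pair_big_dep xpredT (fun i j : 'I_n => (i <= j)%N) (fun _ _ => 1)) /=.
rewrite (reindex_inj rev_ord_inj) /=.
apply: eq_bigr => i _; rewrite (@inner n (rev_ord i)) /=; have := ltn_ord i; lia.
Qed.
Lemma tri n : \sum_(j < n) j.+1 = (n * (n + 1)) %/ 2.
Proof.
elim: n => [|n IH]; first by rewrite big_ord0.
rewrite big_ord_recr /= IH.
have e : (n.+1 * (n.+1 + 1)) = n * (n + 1) + 2 * n.+1 by lia.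
rewrite e divnDr; last by rewrite dvdn_mulr.
rewrite mulKn //.
Qed.


Theorem theorem4 (n : nat) : 1 <= n -> #|E_ORCT n| = (n * (n + 1)) %/ 2.
Proof.
case: n => [//|m] _.
have -> : E_ORCT m.+1 = [set clamp p.1 p.2 | p in [set p : 'I_m.+1 * 'I_m.+1 | (p.1 <= p.2)%N]].
  apply/setP => a; apply/idP/imsetP.
    by move/char => [i [j [hij ->]]]; exists (i, j); rewrite // inE.
  by move=> [[i j]]; rewrite inE /= => hij ->; apply: clamp_in.
rewrite card_in_imset.
  by rewrite card_tri tri.
move=> [i j] [i' j']; rewrite !inE /= => h h' e.
have e0 := congr1 (fun f : {ffun 'I_m.+1 -> 'I_m.+1} => (f ord0 : nat)) e.
have e1 := congr1 (fun f : {ffun 'I_m.+1 -> 'I_m.+1} => (f ord_max : nat)) e.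
rewrite /= !clampE // in e0 e1.
have := ltn_ord j; have := ltn_ord j'.
move=> hj hj'; move: e0 e1 => /= e0 e1; congr pair; apply/val_inj => /=; lia.
Qed.
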